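(* For every $\theta,\bar\theta\in\mathbb R^m$ there exists a stochastic policy $\mu_{\theta,\bar\theta}:\mathcal S\to\Delta_{|\mathcal A|}$ such that \[ V_\theta-V_{\bar\theta}=\Pi^{\mu_{\theta,\bar\theta}}\Phi(\theta-\bar\theta). \] Moreover, $\mu_{\theta,\bar\theta}$ can be chosen as a measurable function of $(\theta,\bar\theta)$.
   Context: Let $\mathcal S=\{1,\dots,|\mathcal S|\}$ and $\mathcal A=\{1,\dots,|\mathcal A|\}$ be finite sets. State-action vectors in $\mathbb R^{|\mathcal S||\mathcal A|}$ are ordered as $(1,1),(2,1),\dots,(|\mathcal S|,1),(1,2),\dots$. The feature matrix $\Phi\in\mathbb R^{|\mathcal S||\mathcal A|\times m}$ has rows $\phi(s,a)^\top$. For $\theta\in\mathbb R^m$, $V_\theta\in\mathbb R^{|\mathcal S|}$ is defined by $V_\theta(s)=\max_{a\in\mathcal A}\phi(s,a)^\top\theta$. A stochastic policy is a map $\mu:\mathcal S\to\Delta_{|\mathcal A|}$, where $\Delta_{|\mathcal A|}$ is the probability simplex. The matrix $\Pi^\mu\in\mathbb R^{|\mathcal S|\times|\mathcal S||\mathcal A|}$ has entry $\mu(a\mid s)$ at row $s$, column $(s,a)$, and zeros elsewhere, so $(\Pi^\mu Q)(s)=\sum_a\mu(a\mid s)Q(s,a)$. *)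

(* Defs.v *)
From HB Require Import structures.
From mathcomp Require Import all_boot all_order all_algebra.
From mathcomp Require Import all_classical all_reals all_analysis.
Set Implicit Arguments. Unset Strict Implicit. Unset Printing Implicit Defensive.
Import Order.TTheory GRing.Theory Num.Theory.
Local Open Scope ring_scope.

(* States S = 'I_nS, actions A = 'I_nA.+1 (nonempty, so the max in V_theta is
   defined).  State-action index of (s,a): a * nS + s (0-based), i.e. the
   ordering (1,1),(2,1),...,(|S|,1),(1,2),...  mxvec_index a s has value
   a * nS + s; we cast it to 'I_(nS * nA.+1). *)
Definition sa_idx (nS nA : nat) (s : 'I_nS) (a : 'I_nA.+1) : 'I_(nS * nA.+1) :=
  cast_ord (mulnC nA.+1 nS) (mxvec_index a s).

Definition Vth (R : realType) (nS nA m : nat) (Phi : 'M[R]_(nS * nA.+1, m))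
  (th : 'cV[R]_m) : 'cV[R]_nS :=
  \col_s \big[Num.max / (Phi *m th) (sa_idx s ord0) 0]_(a < nA.+1)
           (Phi *m th) (sa_idx s a) 0.

Definition is_policy (R : realType) (nS nA : nat) (mu : 'M[R]_(nS, nA.+1)) : Prop :=
  (forall s a, 0 <= mu s a) /\ (forall s, \sum_(a < nA.+1) mu s a = 1).

Definition PiMat (R : realType) (nS nA : nat) (mu : 'M[R]_(nS, nA.+1))
  : 'M[R]_(nS, nS * nA.+1) :=
  \matrix_(s, k) \sum_(a < nA.+1) (if k == sa_idx s a then mu s a else 0).

(* column vector of a tuple (R^m carries its Borel = product sigma-algebra
   through the measurable structure on m.-tuple R) *)
Definition tcol (R : realType) (m : nat) (t : m.-tuple R) : 'cV[R]_m :=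
  \col_i tnth t i.

(* Main.v *)
Require Import Defs.
From HB Require Import structures.
From mathcomp Require Import all_boot all_order all_algebra.
From mathcomp Require Import all_classical all_reals all_analysis.
From mathcomp Require Import measurable_realfun.
From mathcomp Require Import lra ring.
Import Order.TTheory GRing.Theory Num.Theory.
Local Open Scope ring_scope.
Local Open Scope classical_set_scope.

Set Implicit Arguments. Unset Strict Implicit.

Section W.
Variables (R : realType) (n : nat) (d : 'I_n.+1 -> R) (D : R).
Definition gi a : R := if D < d a then 1 else 0.
Definition li a : R := if d a < D then 1 else 0.
Definition ei a : R := if d a == D then 1 else 0.
Definition cE := \sum_a ei a.
Definition PP := \sum_a (d a - D) * gi a.
Definition NN := \sum_a (D - d a) * li a.
Definition ZZ := NN * (\sum_a gi a) + PP * (\sum_a li a).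
Definition W a := if 0 < cE then ei a / cE else (NN * gi a + PP * li a) / ZZ.

Lemma PP_ge0 : 0 <= PP.
Proof. by apply: sumr_ge0 => a _; rewrite /gi; case: ifP => h; rewrite ?mulr0 // mulr1 subr_ge0 ltW. Qed.
Lemma NN_ge0 : 0 <= NN.
Proof. by apply: sumr_ge0 => a _; rewrite /li; case: ifP => h; rewrite ?mulr0 // mulr1 subr_ge0 ltW. Qed.
Lemma gi_ge0 a : 0 <= gi a. Proof. by rewrite /gi; case: ifP. Qed.
Lemma li_ge0 a : 0 <= li a. Proof. by rewrite /li; case: ifP. Qed.
Lemma ei_ge0 a : 0 <= ei a. Proof. by rewrite /ei; case: ifP. Qed.

Lemma W_props : (exists a, D <= d a) -> (exists b, d b <= D) ->
  (forall a, 0 <= W a) /\ \sum_a W a = 1 /\ \sum_a W a * d a = D.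
Proof.
move=> [a Ha] [b Hb].
have [cp|] := boolP (0 < cE).
  have WE c : W c = ei c / cE by rewrite /W cp.
  have S1 : \sum_c W c = \sum_c ei c / cE by apply: eq_bigr => c _; rewrite WE.
  have S2 : \sum_c W c * d c = \sum_c ei c / cE * d c by apply: eq_bigr => c _; rewrite WE.
  rewrite S1 S2.
  split; first by move=> c; rewrite WE; apply: divr_ge0; [exact: ei_ge0|exact: ltW].
  split; first by rewrite -mulr_suml mulfV // gt_eqF.
  transitivity (\sum_c ei c / cE * D).
    apply: eq_bigr => c _; rewrite /ei; case: eqP => [->|] //; by rewrite !mul0r.
  by rewrite -mulr_suml -mulr_suml mulfV ?mul1r // gt_eqF.
rewrite lt_def negb_and negbK.
have -> : (0 <= cE) = true by apply: sumr_ge0 => c _; exact: ei_ge0.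
rewrite orbF => cE0'.
have WE c : W c = (NN * gi c + PP * li c) / ZZ by rewrite /W ltNge (eqP cE0') lexx.
move/eqP: cE0' => cE0.
have S1 : \sum_c W c = \sum_c (NN * gi c + PP * li c) / ZZ by apply: eq_bigr => c _; rewrite WE.
have S2 : \sum_c W c * d c = \sum_c (NN * gi c + PP * li c) / ZZ * d c by apply: eq_bigr => c _; rewrite WE.
rewrite S1 S2.
have ne c : d c != D.
  apply/negP => /eqP h.
  have : ei c <= cE by rewrite /cE (bigD1 c) //= lerDl sumr_ge0 // => i _; exact: ei_ge0.
  by rewrite cE0 /ei h eqxx ler10.
have Ha' : D < d a by rewrite lt_def ne Ha.
have Hb' : d b < D by rewrite lt_def eq_sym ne Hb.
have Pp : 0 < PP.
  rewrite /PP (bigD1 a) //= [gi a]/gi Ha' mulr1.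
  apply: ltr_wpDr; first by apply: sumr_ge0 => i _; rewrite /gi; case: ifP => h; rewrite ?mulr0 // mulr1 subr_ge0 ltW.
  by rewrite subr_gt0.
have Np : 0 < NN.
  rewrite /NN (bigD1 b) //= [li b]/li Hb' mulr1.
  apply: ltr_wpDr; first by apply: sumr_ge0 => i _; rewrite /li; case: ifP => h; rewrite ?mulr0 // mulr1 subr_ge0 ltW.
  by rewrite subr_gt0.
have Zp : 0 < ZZ.
  have h1 : 0 <= PP * \sum_i li i.
    by apply: mulr_ge0; [exact: ltW|apply: sumr_ge0 => i _; exact: li_ge0].
  have h2 : 0 < NN * \sum_i gi i.
    apply: mulr_gt0 => //; rewrite (bigD1 a) //= [gi a]/gi Ha'.
    have : 0 <= \sum_(i | i != a) gi i by apply: sumr_ge0 => i _; exact: gi_ge0.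
    lra.
  rewrite /ZZ; lra.
split.
  move=> c; rewrite WE; apply: divr_ge0; last exact: ltW.
  by apply: addr_ge0; apply: mulr_ge0; rewrite ?gi_ge0 ?li_ge0 ?ltW.
split.
  rewrite -mulr_suml big_split /= -!mulr_sumr -/ZZ mulfV //.
  by rewrite gt_eqF.
have sw : \sum_c (NN * gi c + PP * li c) = ZZ.
  by rewrite big_split /= -!mulr_sumr.
have key : \sum_c (NN * gi c + PP * li c) * (d c - D) = 0.
  transitivity (\sum_c (NN * ((d c - D) * gi c) - PP * ((D - d c) * li c))).
    by apply: eq_bigr => c _; ring.
  rewrite sumrB -!mulr_sumr -/PP -/NN; ring.
have sd : \sum_c (NN * gi c + PP * li c) * d c = ZZ * D.
  transitivity (\sum_c ((NN * gi c + PP * li c) * (d c - D) + (NN * gi c + PP * li c) * D)).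
    by apply: eq_bigr => c _; ring.
  by rewrite big_split /= key add0r -mulr_suml sw.
transitivity ((\sum_c (NN * gi c + PP * li c) * d c) / ZZ).
  by rewrite mulr_suml; apply: eq_bigr => c _; rewrite mulrAC.
by rewrite sd mulrC mulKf // gt_eqF.
Qed.
End W.

Lemma measurable_inv (R : realType) : measurable_fun [set: R] (GRing.inv : R -> R).
Proof.
have -> : [set: R] = [set x | x != 0] `|` [set 0].
  by apply/seteqP; split => x //= _; case: eqVneq => [->|]; [right|left].
apply/measurable_funU => //.
  by apply: open_measurable; exact: open_neq.
split; last exact: measurable_fun_set1.
apply: open_continuous_measurable_fun; first exact: open_neq.
by move=> x; rewrite inE => /= x0; apply: inv_continuous.
Qed.


Lemma measurable_W (R : realType) d (T : measurableType d) n (dd : 'I_n.+1 -> T -> R) (DD : T -> R) :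
  (forall a, measurable_fun setT (dd a)) -> measurable_fun setT DD ->
  forall a, measurable_fun setT (fun x => W (fun c => dd c x) (DD x) a).
Proof.
move=> md mD a.
have mg c : measurable_fun setT (fun x => gi (fun c => dd c x) (DD x) c).
  by apply: measurable_fun_ifT => //; apply: measurable_fun_ltr.
have ml c : measurable_fun setT (fun x => li (fun c => dd c x) (DD x) c).
  by apply: measurable_fun_ifT => //; apply: measurable_fun_ltr.
have me c : measurable_fun setT (fun x => ei (fun c => dd c x) (DD x) c).
  by apply: measurable_fun_ifT => //; apply: measurable_fun_eqr.
have mcE : measurable_fun setT (fun x => cE (fun c => dd c x) (DD x)).
  by apply: measurable_sum.
have mP : measurable_fun setT (fun x => PP (fun c => dd c x) (DD x)).
  by apply: measurable_sum => c; apply: measurable_funM => //; apply: measurable_funB.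
have mN : measurable_fun setT (fun x => NN (fun c => dd c x) (DD x)).
  by apply: measurable_sum => c; apply: measurable_funM => //; apply: measurable_funB.
have mZ : measurable_fun setT (fun x => ZZ (fun c => dd c x) (DD x)).
  apply: measurable_funD; apply: measurable_funM => //; exact: measurable_sum.
apply: measurable_fun_ifT.
- by apply: measurable_fun_ltr.
- apply: measurable_funM => //; exact: measurableT_comp (@measurable_inv R) mcE.
- apply: measurable_funM; last exact: measurableT_comp (@measurable_inv R) mZ.
  by apply: measurable_funD; apply: measurable_funM.
Qed.

Lemma bigmax_ex (R : realType) n (F : 'I_n.+1 -> R) :
  exists a, \big[Num.max / F ord0]_(i < n.+1) F i = F a.
Proof.
apply: (big_ind (fun x => exists a, x = F a)); first by exists ord0.
- move=> x y [i ->] [j ->]; case: (leP (F i) (F j)) => _; by [exists j | exists i].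
- by move=> i _; exists i.
Qed.

Lemma bigmax_ub (R : realType) n (F : 'I_n.+1 -> R) a :
  F a <= \big[Num.max / F ord0]_(i < n.+1) F i.
Proof. exact: le_bigmax. Qed.

Lemma measurable_bigmax (R : realType) d (T : measurableType d) (I : Type)
  (F : I -> T -> R) (x0 : T -> R) (r : seq I) :
  measurable_fun setT x0 -> (forall i, measurable_fun setT (F i)) ->
  measurable_fun setT (fun x => \big[Num.max / x0 x]_(i <- r) F i x).
Proof.
move=> m0 mF; elim: r => [|i r IH].
  by under eq_fun do rewrite big_nil.
under eq_fun do rewrite big_cons.
exact: measurable_maxr.
Qed.

Unset Implicit Arguments. Set Strict Implicit.

Theorem lemma3 (R : realType) (nS nA m : nat) (Phi : 'M[R]_(nS * nA.+1, m)) :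
  exists mu : 'cV[R]_m -> 'cV[R]_m -> 'M[R]_(nS, nA.+1),
    (forall th thb : 'cV[R]_m,
        is_policy (mu th thb) /\
        Vth Phi th - Vth Phi thb = PiMat (mu th thb) *m Phi *m (th - thb)) /\
    (forall (s : 'I_nS) (a : 'I_nA.+1),
        measurable_fun [set: m.-tuple R * m.-tuple R]
          (fun p : m.-tuple R * m.-tuple R => mu (tcol p.1) (tcol p.2) s a)).
Proof.
pose q (th : 'cV[R]_m) (s : 'I_nS) (a : 'I_nA.+1) : R := (Phi *m th) (sa_idx s a) 0.
pose dd th thb s a := q th s a - q thb s a.
pose DD th thb s := Vth Phi th s 0 - Vth Phi thb s 0.
exists (fun th thb => \matrix_(s, a) W (dd th thb s) (DD th thb s) a).
split.
  move=> th thb.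
  have VE th' s : Vth Phi th' s 0 = \big[Num.max/q th' s ord0]_a q th' s a by rewrite /Vth mxE.
  have WP s := W_props (d := dd th thb s) (D := DD th thb s).
  have ex1 s : exists a, DD th thb s <= dd th thb s a.
    have [a Ha] := bigmax_ex (q th s).
    exists a; rewrite /DD /dd !VE Ha lerD2l lerN2.
    exact: bigmax_ub.
  have ex2 s : exists a, dd th thb s a <= DD th thb s.
    have [a Ha] := bigmax_ex (q thb s).
    exists a; rewrite /DD /dd !VE Ha lerD2r.
    exact: bigmax_ub.
  split.
    split=> s; have [H1 [H2 H3]] := WP s (ex1 s) (ex2 s).
      by move=> a; rewrite mxE.
    by under eq_bigr do rewrite mxE.
  apply/matrixP => s j; rewrite (ord1 j) {j}.
  have [H1 [H2 H3]] := WP s (ex1 s) (ex2 s).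
  rewrite -mulmxA mulmxBr.
  have -> : (Vth Phi th - Vth Phi thb) s 0 = DD th thb s by rewrite /DD !mxE.
  set v := Phi *m th - Phi *m thb.
  set mu := \matrix_(s0, a) W (dd th thb s0) (DD th thb s0) a.
  rewrite -H3 [RHS]mxE.
  rewrite /PiMat (eq_bigr (fun j => \sum_a (if j == sa_idx s a then mu s a else 0) * v j 0)); last by move=> j _; rewrite mxE mulr_suml.
  rewrite exchange_big /=.
  apply: eq_bigr => a _.
  rewrite (bigD1 (sa_idx s a)) //= eqxx big1 => [|k /negbTE ->]; last by rewrite mul0r.
  rewrite addr0 /mu mxE; congr (_ * _).
  by rewrite /v mxE [X in _ + X]mxE.
move=> s a.
have mq1 k : measurable_fun [set: m.-tuple R * m.-tuple R] (fun p : m.-tuple R * m.-tuple R => (Phi *m tcol p.1) k 0).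
  under eq_fun do rewrite mxE.
  apply: measurable_sum => j; apply: measurable_funM => //.
  under eq_fun do rewrite mxE.
  exact: measurableT_comp (measurable_tnth j) measurable_fst.
have mq2 k : measurable_fun [set: m.-tuple R * m.-tuple R] (fun p : m.-tuple R * m.-tuple R => (Phi *m tcol p.2) k 0).
  under eq_fun do rewrite mxE.
  apply: measurable_sum => j; apply: measurable_funM => //.
  under eq_fun do rewrite mxE.
  exact: measurableT_comp (measurable_tnth j) measurable_snd.
under eq_fun do rewrite mxE.
apply: (@measurable_W R _ _ nA (fun c p => dd (tcol p.1) (tcol p.2) s c) (fun p => DD (tcol p.1) (tcol p.2) s)).
  by move=> c; rewrite /dd /q; apply: measurable_funB.
have VE th' s0 : Vth Phi th' s0 0 = \big[Num.max/q th' s0 ord0]_a q th' s0 a by rewrite /Vth mxE.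
rewrite /DD.
under eq_fun do rewrite !VE.
by apply: measurable_funB; apply: measurable_bigmax => // *; rewrite /q; [exact: mq1|exact: mq1|exact: mq2|exact: mq2].
Qed.
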